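(* Let $h,g:\mathbb{Z}^2\to\mathbb{C}$ and $\alpha\in\mathbb{C}$. For $f=f(n,m)$ write $\widetilde f=f(n+1,m)$, $\widehat f=f(n,m+1)$, $\widetilde{\widetilde f}=f(n+2,m)$, etc. Consider, for a spectral parameter $p\in\mathbb{C}$, the linear system for $\varphi:\mathbb{Z}^2\to\mathbb{C}$ $$\widetilde{\widetilde{\varphi}}+h\,\widetilde{\varphi}+\alpha^2\varphi=p^2\varphi,\qquad \widehat{\varphi}=\widetilde{\varphi}-g\,\varphi .$$ Suppose this system is compatible for all $p$, i.e. the two values of $\varphi(n+2,m+1)$ obtained by computing $\widehat{\widetilde{\widetilde{\varphi}}}$ and $\widetilde{\widetilde{\widehat{\varphi}}}$ via the system coincide identically in the free data $\varphi(n,m),\varphi(n+1,m)$. Then $$\widehat{h}-\widetilde{h}=\widetilde{\widetilde{g}}-g,$$ and $(h+\widetilde g)\,g$ is invariant under the shift $n\mapsto n+1$, so that after one summation in the $n$-direction $(h+\widetilde{g})\,g=\beta^2-\alpha^2$, where $\beta^2-\alpha^2$ is the constant of integration. Moreover, if $(h+\widetilde g)g=\beta^2-\alpha^2$ with $\beta$ a constant, then every solution $\varphi$ of the system satisfies $$\widehat{\widehat{\varphi}}+\eta\,\widehat{\varphi}+\beta^2\varphi=p^2\varphi,\qquad \eta=h+\widetilde{g}+\widehat{g}.$$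
   Context: Shift notation: for a function $f$ on $\mathbb{Z}^2$, $\widetilde f(n,m)=f(n+1,m)$ and $\widehat f(n,m)=f(n,m+1)$; combined accents denote composed shifts. *)

(* Defs.v *)
From mathcomp Require Import all_boot all_algebra complex.
From mathcomp Require Import reals.
Set Implicit Arguments. Unset Strict Implicit. Unset Printing Implicit Defensive.
Import GRing.Theory Num.Theory.
Local Open Scope ring_scope.

(* Complex numbers are modelled as R[i] for a realType R (so C = R[i]).
   Functions Z^2 -> C are functions int -> int -> R[i]; f n m = f(n,m).
   tilde f (n,m) = f(n+1,m), hat f (n,m) = f(n,m+1). *)

Definition lax_solution (R : realType) (h g : int -> int -> R[i]) (alpha p : R[i])
    (phi : int -> int -> R[i]) : Prop :=
  forall n m : int,
    phi (n + 2) m + h n m * phi (n + 1) m + alpha ^+ 2 * phi n m = p ^+ 2 * phi n m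
    /\ phi n (m + 1) = phi (n + 1) m - g n m * phi n m.

(* Value of phi(n+2,m+1) obtained as hat(tilde tilde phi), computed with the
   system from the free data a = phi(n,m), b = phi(n+1,m):
   apply the first equation at (n,m+1), then express phi(n,m+1), phi(n+1,m+1)
   via the second equation, and phi(n+2,m) via the first. *)
Definition val_hat_tt (R : realType) (h g : int -> int -> R[i]) (alpha p : R[i])
    (n m : int) (a b : R[i]) : R[i] :=
  let phi_n_m1  := b - g n m * a in
  let phi_n2_m  := (p ^+ 2 - alpha ^+ 2) * a - h n m * b in
  let phi_n1_m1 := phi_n2_m - g (n + 1) m * b in
  (p ^+ 2 - alpha ^+ 2) * phi_n_m1 - h n (m + 1) * phi_n1_m1.

(* Value of phi(n+2,m+1) obtained as tilde tilde (hat phi): apply the second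
   equation at (n+2,m), then express phi(n+3,m), phi(n+2,m) via the first. *)
Definition val_tt_hat (R : realType) (h g : int -> int -> R[i]) (alpha p : R[i])
    (n m : int) (a b : R[i]) : R[i] :=
  let phi_n2_m := (p ^+ 2 - alpha ^+ 2) * a - h n m * b in
  let phi_n3_m := (p ^+ 2 - alpha ^+ 2) * b - h (n + 1) m * phi_n2_m in
  phi_n3_m - g (n + 2) m * phi_n2_m.

Definition lax_compatible (R : realType) (h g : int -> int -> R[i]) (alpha : R[i]) : Prop :=
  forall (p : R[i]) (n m : int) (a b : R[i]),
    val_hat_tt h g alpha p n m a b = val_tt_hat h g alpha p n m a b.

(* Main.v *)
Require Import Defs.
From mathcomp Require Import all_boot all_algebra complex.
From mathcomp Require Import reals ring.
Import GRing.Theory Num.Theory.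
Local Open Scope ring_scope.

Theorem proposition2p1 (R : realType) (h g : int -> int -> R[i]) (alpha : R[i]) :
  lax_compatible h g alpha ->
  (* hat h - tilde h = tilde tilde g - g *)
  (forall n m : int, h n (m + 1) - h (n + 1) m = g (n + 2) m - g n m)
  (* (h + tilde g) g is invariant under n |-> n+1 *)
  /\ (forall n m : int,
        (h (n + 1) m + g (n + 2) m) * g (n + 1) m = (h n m + g (n + 1) m) * g n m)
  (* after one summation in n: (h + tilde g) g = beta^2 - alpha^2,
     beta^2 - alpha^2 being the constant of integration (w.r.t. n) *)
  /\ (exists beta : int -> R[i], forall n m : int,
        (h n m + g (n + 1) m) * g n m = beta m ^+ 2 - alpha ^+ 2)
  (* if (h + tilde g) g = beta^2 - alpha^2 with beta constant, every solution
     satisfies the hat-direction equation with eta = h + tilde g + hat g *)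
  /\ (forall beta : R[i],
        (forall n m : int, (h n m + g (n + 1) m) * g n m = beta ^+ 2 - alpha ^+ 2) ->
        forall (p : R[i]) (phi : int -> int -> R[i]),
          lax_solution h g alpha p phi ->
          forall n m : int,
            phi n (m + 2) + (h n m + g (n + 1) m + g n (m + 1)) * phi n (m + 1)
              + beta ^+ 2 * phi n m = p ^+ 2 * phi n m).
Proof.
move=> Hc.
have A : forall n m : int, h n (m + 1) - h (n + 1) m = g (n + 2) m - g n m.
  move=> n m.
  have E : forall p : R[i], (p ^+ 2 - alpha ^+ 2) * (h n (m + 1) - h (n + 1) m - g (n + 2) m + g n m) = 0.
    move=> p; have := Hc p n m 1 0; rewrite /val_hat_tt /val_tt_hat => /eqP.
    rewrite -subr_eq0 => /eqP H; cbv zeta in H; apply/eqP; rewrite -oppr_eq0; apply/eqP; rewrite -H; ring.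
  have E1 := E (alpha + 1); have E2 := E (alpha - 1).
  have : 2 * (h n (m + 1) - h (n + 1) m - g (n + 2) m + g n m) = 0.
    rewrite -[RHS](addr0 0) -[X in _ = X + _]E1 -[X in _ = _ + X]E2.
    ring.
  move/eqP; rewrite mulf_eq0 pnatr_eq0 /= => /eqP HX.
  apply/eqP; rewrite -subr_eq0; apply/eqP; rewrite -HX; ring.
have B : forall n m : int,
    (h (n + 1) m + g (n + 2) m) * g (n + 1) m = (h n m + g (n + 1) m) * g n m.
  move=> n m; have := Hc 0 n m 0 1; rewrite /val_hat_tt /val_tt_hat => /eqP.
  rewrite -subr_eq0 => /eqP H; cbv zeta in H.
  have Ah : h n (m + 1) = h (n + 1) m + g (n + 2) m - g n m.
    apply/eqP; rewrite -subr_eq0; apply/eqP.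
    transitivity (h n (m + 1) - h (n + 1) m - (g (n + 2) m - g n m)); first ring.
    by rewrite (A n m) subrr.
  apply/eqP; rewrite -subr_eq0; apply/eqP; rewrite -H Ah; ring.
split; first exact: A.
split; first exact: B.
split.
  pose c m := (h 0 m + g 1 m) * g 0 m.
  exists (fun m => sqrtC (c m + alpha ^+ 2)) => n m; rewrite sqrtCK addrK.
  have Hp : forall k : nat, (h k%:Z m + g (k%:Z + 1) m) * g k%:Z m = c m.
    elim=> [|k IH]; first by rewrite add0r /c; reflexivity.
    rewrite -IH -(B k m).
    have -> : (k.+1 : int) = k%:Z + 1 by rewrite -addn1 PoszD.
    by rewrite -addrA.
  have Hn : forall k : nat, (h (- k%:Z) m + g (- k%:Z + 1) m) * g (- k%:Z) m = c m.
    elim=> [|k IH]; first by rewrite oppr0 Hp.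
    rewrite -IH -(B (- k.+1%:Z) m).
    have -> : - k.+1%:Z + 1 = - k%:Z by rewrite -addn1 PoszD; ring.
    by have -> : - k.+1%:Z + 2 = - k%:Z + 1 by rewrite -addn1 PoszD; ring.
  case: n => k; first exact: Hp.
  by rewrite NegzE; exact: Hn.
move=> beta Hb p phi Hs n m.
have [E1 _] := Hs n m.
have [_ E2] := Hs n m.
have [_ E3] := Hs (n + 1) m.
have [_ E4] := Hs n (m + 1).
have -> : m + 2 = m + 1 + 1 by rewrite -addrA.
rewrite E4 E3 E2.
have -> : n + 1 + 1 = n + 2 by rewrite -addrA.
have -> : phi (n + 2) m = p ^+ 2 * phi n m - h n m * phi (n + 1) m - alpha ^+ 2 * phi n m.
  by rewrite -E1; ring.
have -> : beta ^+ 2 = (h n m + g (n + 1) m) * g n m + alpha ^+ 2.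
  by rewrite Hb; ring.
ring.
Qed.
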